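(* Let $q$ be a prime power, let $\mathbb{K}$ be a field containing $\mathbb{F}_q$, and let $f,g\in\mathbb{K}[X]$. Put $F(X)=f(X^{q-1})$ and $G(X)=\prod_{w\in\mathbb{F}_q^\times} g(wX)$. Suppose that $G$ has no repeated roots in an algebraic closure $\overline{\mathbb{K}}$ of $\mathbb{K}$. If every root of $g$ in $\overline{\mathbb{K}}$ is also a root of $F$, then $G$ divides $F$ in $\mathbb{K}[X]$. *)

(* Defs.v *)
From HB Require Import structures.
From mathcomp Require Import all_boot all_order all_algebra all_field.
Set Implicit Arguments. Unset Strict Implicit. Unset Printing Implicit Defensive.
Import GRing.Theory.
Local Open Scope ring_scope.

Definition polyF (Fq : finFieldType) (K : fieldType) (f : {poly K}) : {poly K} :=
  f \Po 'X^(#|Fq|.-1).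

Definition polyG (Fq : finFieldType) (K : fieldType) (iota : {rmorphism Fq -> K})
  (g : {poly K}) : {poly K} :=
  \prod_(w : Fq | w != 0) (g \Po (iota w *: 'X)).

Definition no_repeated_roots (K : fieldType) (L : fieldType) (phi : {rmorphism K -> L})
  (p : {poly K}) : Prop :=
  forall x : L, ~~ ((('X - x%:P) ^+ 2) %| map_poly phi p).

(* Main.v *)
Require Import Defs.
From HB Require Import structures.
From mathcomp Require Import all_boot all_order all_algebra all_field.
Import GRing.Theory.
Local Open Scope ring_scope.

Lemma uniq_of_sqfree (L : fieldType) (r : seq L) :
  (forall x : L, ~~ ((('X - x%:P) ^+ 2) %| \prod_(z <- r) ('X - z%:P))) -> uniq r.
Proof.
elim: r => [//|z r IH] H /=; apply/andP; split.
  apply/negP => zr; move: (H z); rewrite big_cons expr2.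
  by rewrite dvdp_mul2l ?polyXsubC_eq0 // dvdp_XsubCl root_prod_XsubC zr.
apply: IH => x; apply/negP => dx; move/negP: (H x); apply.
by rewrite big_cons dvdp_mull.
Qed.

Lemma sqfree_dvd (L : closedFieldType) (p q : {poly L}) :
  (forall x : L, ~~ ((('X - x%:P) ^+ 2) %| p)) ->
  (forall x, root p x -> root q x) -> p %| q.
Proof.
move=> Hs Hr.
have p0 : p != 0.
  by apply/eqP => p0; move: (Hs 0); rewrite p0 dvdp0.
have [r pE] := closed_field_poly_normal p.
have lc0 : lead_coef p != 0 by rewrite lead_coef_eq0.
have ur : uniq r.
  apply: uniq_of_sqfree => x; move: (Hs x); rewrite {1}pE dvdpZr //.
have aq : all (root q) r.
  apply/allP => z zr; apply: Hr; rewrite pE rootZ // root_prod_XsubC //.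
have [q' qE] := uniq_roots_prod_XsubC aq (ltac:(by rewrite uniq_rootsE)).
by rewrite pE dvdpZl // qE dvdp_mull.
Qed.

Lemma unit_pow (Fq : finFieldType) (w : Fq) : w != 0 -> w ^+ (#|Fq|.-1) = 1.
Proof.
move=> w0; apply: (mulIf w0); rewrite mul1r -exprSr.
by rewrite prednK ?expf_card // (ltn_trans _ (finNzRing_gt1 Fq)).
Qed.

Theorem lemma1 (Fq : finFieldType) (K : fieldType) (iota : {rmorphism Fq -> K})
  (L : closedFieldType) (phi : {rmorphism K -> L}) (f g : {poly K}) :
  no_repeated_roots phi (polyG iota g) ->
  (forall x : L, root (map_poly phi g) x -> root (map_poly phi (polyF Fq f)) x) ->
  polyG iota g %| polyF Fq f.
Proof.
move=> Hs Hr; rewrite -(dvdp_map phi); apply: sqfree_dvd => // x.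
rewrite /polyG rmorph_prod /root horner_prod => /prodf_eq0 [w w0].
rewrite /= map_comp_poly horner_comp map_polyZ map_polyX hornerZ hornerX => /Hr.
rewrite /root /polyF !map_comp_poly map_polyXn !horner_comp !hornerXn.
by rewrite exprMn -rmorphXn -rmorphXn unit_pow // !rmorph1 mul1r.
Qed.
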